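(* Consider the Axelrod model with $F$ features and $q$ states on the path with vertex set $\{0,1,\dots,N\}$ (so $N$ edges), started with all initial features i.i.d. uniform on $\{1,\dots,q\}$, and the coupled urn process $(B_0(t),\dots,B_F(t))$ defined below. Then almost surely, for all $t\ge0$, $$B_0(t)\le w_0(t).$$
   Context: For an edge $e=\{x,y\}$, $\bar X_t(e)=\sum_{i=1}^F\mathbf 1\{X_t^i(x)=X_t^i(y)\}$, $w_j(t)=\#\{e:\bar X_t(e)=j\}$, and the total number of agreements is $W(t)=\sum_{j=0}^F j\,w_j(t)$. Axelrod dynamics: for each ordered pair $(x,y)$ of adjacent vertices with $X(x)\ne X(y)$, at rate $F(x,y)/2$ (with $F(x,y)=\bar X(\{x,y\})/F$) vertex $x$ copies from $y$ one feature chosen uniformly among those on which they differ; each such update changes $W$ by $0$, $1$ or $2$. Urn process: there are $F+1$ boxes labelled $0,\dots,F$ with $B_j(0)=w_j(0)$ balls in box $j$. At each time $t$ at which the Axelrod model is updated: if $W(t)-W(t-)\le1$, nothing is done; if $W(t)-W(t-)=2$, a box $j$ is chosen uniformly at random among the nonempty boxes with $1\le j\le F-1$ (if there is one) and one ball is moved from box $j$ to box $j+1$; in case a ball has been so moved, additionally one ball is moved from box $0$ to box $1$ if box $0$ is nonempty. The urn stops when the Axelrod model reaches an absorbing state. *)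

(* Defs.v *)
From mathcomp Require Import all_boot.
Set Implicit Arguments. Unset Strict Implicit. Unset Printing Implicit Defensive.

(* A configuration: vertex x in {0..N} ('I_N.+1) has F features, each taking
   one of q states (states encoded as 'I_q, i.e. {0..q-1} instead of {1..q}). *)
Definition config (N F q : nat) := {ffun 'I_N.+1 -> {ffun 'I_F -> 'I_q}}.

Definition agreev N F q (X : config N F q) (x y : 'I_N.+1) : nat :=
  #|[pred k : 'I_F | X x k == X y k]|.

(* the i-th edge of the path (i : 'I_N) is {i, i+1} *)
Definition eleft N (i : 'I_N) : 'I_N.+1 := widen_ord (leqnSn N) i.
Definition eright N (i : 'I_N) : 'I_N.+1 := lift ord0 i.

Definition agree N F q (X : config N F q) (i : 'I_N) : nat :=
  agreev X (eleft i) (eright i).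

Definition w N F q (X : config N F q) (j : nat) : nat :=
  #|[pred i : 'I_N | agree X i == j]|.

(* W = total number of agreements = sum_j j w_j *)
Definition Wtot N F q (X : config N F q) : nat := \sum_(i < N) agree X i.

Definition adj N (x y : 'I_N.+1) : bool :=
  ((x : nat).+1 == y) || ((y : nat).+1 == x).

Definition copy_feature N F q (X : config N F q) (x y : 'I_N.+1) (k : 'I_F)
  : config N F q :=
  [ffun z => if z == x then [ffun l => if l == k then X y k else X x l]
             else X z].

(* One Axelrod update that happens with positive rate: x, y adjacent,
   X(x) <> X(y), rate F(x,y)/2 > 0 (i.e. at least one agreement), and x copies
   from y one feature k on which they differ. *)
Definition axelrod_step N F q (X X' : config N F q) : Prop :=
  exists (x y : 'I_N.+1) (k : 'I_F),
    [/\ adj x y, X x != X y, 0 < agreev X x y, X x k != X y k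
      & X' = copy_feature X x y k].

(* urn contents: B j = number of balls in box j (boxes 0..F) *)
Definition move_ball (B : nat -> nat) (j : nat) : nat -> nat :=
  fun i => if i == j then B i - 1 else if i == j.+1 then B i + 1 else B i.

Definition urn_step (F : nat) (WX WX' : nat) (B B' : nat -> nat) : Prop :=
  if WX' == WX + 2 then
    ((forall j, 1 <= j <= F.-1 -> B j = 0) /\ B' = B) \/
    (exists j, [/\ 1 <= j <= F.-1, 0 < B j &
       B' = (let B1 := move_ball B j in
             if 0 < B1 0 then move_ball B1 0 else B1)])
  else B' = B.

(* Main.v *)
Require Import Defs.
From mathcomp Require Import all_boot.
From Stdlib Require Import Lia.
Set Implicit Arguments. Unset Strict Implicit. Unset Printing Implicit Defensive.

Ltac tolia := 
  (repeat match goal with H : is_true (leq _ _) |- _ => move/leP: H => H end);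
  try apply/leP;
  repeat match goal with H : context[addn] |- _ => rewrite -plusE in H end;
  repeat match goal with H : context[muln] |- _ => rewrite -multE in H end;
  repeat match goal with H : context[subn] |- _ => rewrite -minusE in H end;
  rewrite -?plusE -?multE -?minusE; lia.

Lemma card_sumb (T : finType) (P : pred T) : #|[pred i | P i]| = \sum_(i : T) (P i : nat).
Proof. rewrite -sum1_card big_mkcond /=; apply: eq_bigr => i _; by rewrite inE; case: (P i). Qed.

Lemma sum_eq_ord n (j : nat) (c : nat -> nat) : \sum_(i < n) ((i : nat) == j) * c i = (j < n) * c j.
Proof.
elim: n => [|n IH]; first by rewrite big_ord0.
rewrite big_ord_recr /= IH.
case: (ltngtP j n) => H.
- by rewrite (ltn_trans H (ltnSn n)) addn0.
- by rewrite ltnS leqNgt H.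
- by rewrite H ltnSn.
Qed.

Lemma agreev_sym N F q (X : config N F q) a b : agreev X a b = agreev X b a.
Proof. rewrite /agreev; apply: eq_card => l; by rewrite !inE eq_sym. Qed.

Lemma agreev_le N F q (X : config N F q) a b : agreev X a b <= F.
Proof. rewrite /agreev; apply: leq_trans (max_card _) _; by rewrite card_ord. Qed.

Lemma agreev_lt N F q (X : config N F q) a b k : X a k != X b k -> agreev X a b < F.
Proof.
move=> H; have E := cardC [pred l | X a l == X b l]; rewrite card_ord in E.
rewrite /agreev; suff: #|[pred l | X a l == X b l]| < #|[pred l | X a l == X b l]| + #|[predC [pred l | X a l == X b l]]| by rewrite E.
rewrite -{1}(addn0 #|_|) ltn_add2l; apply/card_gt0P; exists k; by rewrite !inE.
Qed.

Lemma swap13 (a r b : nat) : a + r + b = b + r + a.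
Proof. by rewrite -addnA addnC [r + b]addnC. Qed.

Section Copy.
Variables (N F q : nat) (X : config N F q) (x y : 'I_N.+1) (k : 'I_F).
Let X' := copy_feature X x y k.

Lemma cA a b : a != x -> b != x -> agreev X' a b = agreev X a b.
Proof.
move=> Ha Hb; rewrite /agreev; apply: eq_card => l; by rewrite !inE /X' !ffunE (negbTE Ha) (negbTE Hb).
Qed.

Lemma cB b : b != x -> agreev X' x b + (X x k == X b k) = agreev X x b + (X y k == X b k).
Proof.
move=> Hb; rewrite /agreev (cardD1 k) [in RHS](cardD1 k) !inE /X' !ffunE eqxx (negbTE Hb) !ffunE eqxx.
have -> : #|[predD1 [pred l | [ffun l => if l == k then X y k else X x l] l == X b l] & k]|
  = #|[predD1 [pred l | X x l == X b l] & k]|.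
  apply: eq_card => l; rewrite !inE ffunE; by case: (l =P k).
exact: swap13.
Qed.

Definition cc i := ((eleft i == x) && (X x k == X (eright i) k)) || ((eright i == x) && (X x k == X (eleft i) k)).
Definition dd i := ((eleft i == x) && (X y k == X (eright i) k)) || ((eright i == x) && (X y k == X (eleft i) k)).
Definition inc (i : 'I_N) := (eleft i == x) || (eright i == x).

Lemma eLR (i : 'I_N) : eleft i != eright i.
Proof. by rewrite -val_eqE /= /bump /= add1n neq_ltn ltnSn. Qed.

Lemma cEdge i : agree X' i + cc i = agree X i + dd i.
Proof.
rewrite /agree /cc /dd.
case: (eqVneq (eleft i) x) => [Hl|Hl].
- have Hr : eright i != x by rewrite -Hl eq_sym eLR.
  rewrite Hl eqxx (negbTE Hr) /= !orbF; exact: cB.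
case: (eqVneq (eright i) x) => [Hr|Hr].
- rewrite Hr eqxx /= agreev_sym [agreev X _ _]agreev_sym; exact: cB.
- by rewrite !andFb /= !addn0 cA.
Qed.

Lemma cc_inc i : cc i -> inc i.
Proof. rewrite /cc /inc; by case/orP => /andP [-> _] //; rewrite orbT. Qed.
Lemma dd_inc i : dd i -> inc i.
Proof. rewrite /dd /inc; by case/orP => /andP [-> _] //; rewrite orbT. Qed.

Lemma inc_val i : inc i -> (i : nat) = x \/ (i : nat).+1 = x.
Proof.
rewrite /inc; case/orP => /eqP <-; [left|right] => //=.
Qed.
End Copy.

Lemma edge_exists N (x y : 'I_N.+1) : adj x y ->
  exists e : 'I_N, (eleft e = x /\ eright e = y) \/ (eleft e = y /\ eright e = x).
Proof.
rewrite /adj; case/orP => /eqP H.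
- have Hx : (x : nat) < N by rewrite -ltnS H ltn_ord.
  exists (Ordinal Hx); left; split; apply: val_inj => //=; by rewrite /bump /= add1n.
- have Hy : (y : nat) < N by rewrite -ltnS H ltn_ord.
  exists (Ordinal Hy); right; split; apply: val_inj => //=; by rewrite /bump /= add1n.
Qed.

Lemma step_facts N F q (X X' : config N F q) : axelrod_step X X' ->
  exists x y k (e : 'I_N), [/\ X' = copy_feature X x y k, inc x e,
     cc X x k e = false, dd X x y k e = true & 0 < agree X e < F].
Proof.
case=> x [y [k [Ha Hne Hag Hk ->]]].
have [e He] := edge_exists Ha.
exists x, y, k, e; case: He => [[Hl Hr]|[Hl Hr]].
- split => //.
  + by rewrite /inc Hl eqxx.
  + have Hyx : y != x by rewrite -Hl -Hr eq_sym eLR.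
    rewrite /cc Hl Hr eqxx (negbTE Hyx) /= ?orbF; apply/eqP => E; move/eqP: Hk; apply; exact: E.
  + by rewrite /dd Hl Hr !eqxx.
  + by rewrite /agree Hl Hr Hag (agreev_lt Hk).
- split => //.
  + by rewrite /inc Hr eqxx orbT.
  + have Hyx : y != x by rewrite -Hl -Hr eLR.
    rewrite /cc Hl Hr eqxx (negbTE Hyx) /= eqxx /=; apply/eqP => E; move/eqP: Hk; apply; exact: E.
  + by rewrite /dd Hl Hr !eqxx orbT.
  + by rewrite /agree Hl Hr agreev_sym Hag (agreev_lt Hk).
Qed.

Lemma sum_pred1 n (e : 'I_n) : \sum_(i < n) (i == e : nat) = 1.
Proof. by rewrite -(card_sumb (pred1 e)) (eq_card (B := pred1 e)) ?card1 // => i; rewrite !inE. Qed.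

Lemma step_W N F q (X X' : config N F q) : axelrod_step X X' ->
  Wtot X <= Wtot X' /\ w X 0 <= w X' 0 + (Wtot X' == Wtot X + 2).
Proof.
move=> /step_facts [x [y [k [e [HX' Hie Hce Hde /andP [He0 HeF]]]]]].
set f := agree X; set g := agree X'.
have Hedge : forall i, g i + cc X x k i = f i + dd X x y k i.
  by move=> i; rewrite /g HX'; apply: cEdge.
have Huniq : forall i j, inc x i -> inc x j -> i != e -> j != e -> i = j.
  move=> i j Hi Hj Hie' Hje; apply: val_inj.
  have := inc_val Hi; have := inc_val Hj; have := inc_val Hie.
  move: Hie' Hje; rewrite -!val_eqE /= => /eqP Hie' /eqP Hje H1 H2 H3; lia.
set Kp := fun i : 'I_N => inc x i && (i != e).
have HK : \sum_(i < N) (Kp i : nat) <= 1.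
  rewrite -(card_sumb Kp); apply/card_le1_eqP => i j; rewrite !inE /Kp.
  by case/andP => Hi Hi' /andP [Hj Hj']; apply: Huniq.
have Hcc : \sum_(i < N) (cc X x k i : nat) <= \sum_(i < N) (Kp i : nat).
  apply: leq_sum => i _; rewrite /Kp.
  case Hc: (cc X x k i) => //=.
  rewrite (cc_inc Hc) /=; case: eqP Hc => // ->; by rewrite Hce.
have Hdd : \sum_(i < N) (dd X x y k i : nat) <= 1 + \sum_(i < N) (Kp i : nat).
  rewrite -(sum_pred1 e) -big_split /=; apply: leq_sum => i _; rewrite /Kp.
  case Hd: (dd X x y k i) => //=.
  rewrite (dd_inc Hd) /=; by case: eqP.
have Hdd1 : 1 <= \sum_(i < N) (dd X x y k i : nat).
  by rewrite (bigD1 e) //= Hde.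
have HW : Wtot X' + \sum_(i < N) (cc X x k i : nat) = Wtot X + \sum_(i < N) (dd X x y k i : nat).
  rewrite /Wtot -!big_split /=; apply: eq_bigr => i _; exact: Hedge.
split; first by tolia.
set bad := fun i : 'I_N => (f i == 0) && (g i != 0).
have Hw : w X 0 <= w X' 0 + \sum_(i < N) (bad i : nat).
  rewrite /w !card_sumb -big_split /=; apply: leq_sum => i _; rewrite /bad -/(f i) -/(g i).
  by case: (f i == 0); case: (g i == 0).
case: (boolP [exists i, bad i]) => [/existsP [i Hi] | Hno]; last first.
  move: Hw; rewrite big1 ?addn0 => [Hw|j _]; first by rewrite (leq_trans Hw) ?leq_addr.
  case Hj: (bad j) => //; exfalso; move/existsP: Hno; apply; by exists j.
have Hbi : forall j, bad j -> [/\ Kp j, dd X x y k j & cc X x k j = false].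
  move=> j; rewrite /bad => /andP [/eqP Hf /eqP Hg].
  have := Hedge j; rewrite Hf add0n.
  case Hd: (dd X x y k j); case Hc: (cc X x k j) => /= H; try (exfalso; tolia).
  split => //; rewrite /Kp (dd_inc Hd) /=; apply/eqP => Hje.
  by move: He0; rewrite -/(f e) -Hje Hf.
have [HKi Hdi Hci] := Hbi i Hi.
have Hbad : \sum_(j < N) (bad j : nat) <= 1.
  apply: leq_trans HK; apply: leq_sum => j _.
  case Hj: (bad j) => //=; by have [-> _ _] := Hbi j Hj.
have Hcc0 : \sum_(j < N) (cc X x k j : nat) = 0.
  apply: big1 => j _; case Hc: (cc X x k j) => //.
  have Hje : j != e by apply/eqP => Hje; move: Hc; rewrite Hje Hce.
  move/andP: HKi => [Hii Hie'].
  have Hji := Huniq j i (cc_inc Hc) Hii Hje Hie'.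
  by move: Hc; rewrite Hji Hci.
have Hdd2 : 2 <= \sum_(j < N) (dd X x y k j : nat).
  move/andP: HKi => [Hii Hie'].
  rewrite (bigD1 e) //= Hde (bigD1 i) /=; last by rewrite Hie'.
  by rewrite Hdi.
have HW2 : Wtot X' = Wtot X + 2 by tolia.
rewrite HW2 eqxx /=; tolia.
Qed.

Lemma step_bound N F q (X X' : config N F q) : axelrod_step X X' ->
  Wtot X + 1 <= F * (N - w X 0).
Proof.
move=> /step_facts [x [y [k [e [_ _ _ _ /andP [He0 HeF]]]]]].
have HC := cardC [pred i | agree X i == 0]; rewrite card_ord in HC.
have Hs : w X 0 + \sum_(i < N) (agree X i != 0 : nat) = N.
  rewrite -(card_sumb (fun i => agree X i != 0)) -[in RHS]HC /w; congr (_ + _).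
have -> : N - w X 0 = \sum_(i < N) (agree X i != 0 : nat) by tolia.
rewrite big_distrr /= /Wtot (bigD1 e) //= [in X in _ <= X](bigD1 e) //=.
have Hr : \sum_(i < N | i != e) agree X i <= \sum_(i < N | i != e) F * (agree X i != 0).
  apply: leq_sum => i _; case: eqP => [->|_]; first by [].
  by rewrite muln1 agreev_le.
have : agree X e != 0 by rewrite -lt0n.
move=> ->. rewrite /= muln1. move: Hr HeF. set s1 := \sum_(i < N | i != e) agree X i. set s2 := \sum_(i < N | i != e) _. move=> Hr HeF. tolia.
Qed.

Definition Ssum F (B : nat -> nat) := \sum_(j < F.+1) B j.
Definition Usum F (B : nat -> nat) := \sum_(j < F.+1) j * B j.

Lemma sum_ind1 F j : j <= F -> \sum_(i < F.+1) ((i : nat) == j : nat) = 1.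
Proof.
move=> Hj; have E := sum_eq_ord F.+1 j (fun _ => 1).
have E2 : (j < F.+1) * 1 = 1 by rewrite ltnS Hj.
rewrite E2 in E; rewrite -[RHS]E; apply: eq_bigr => i _; by rewrite muln1.
Qed.

Lemma sum_indid F j : j <= F -> \sum_(i < F.+1) ((i : nat) == j) * i = j.
Proof.
move=> Hj; have E := sum_eq_ord F.+1 j id.
have E2 : (j < F.+1) * j = j by rewrite ltnS Hj mul1n.
by rewrite E2 in E.
Qed.

Lemma move_sums F B j : j < F -> 0 < B j ->
  Ssum F (move_ball B j) = Ssum F B /\ Usum F (move_ball B j) = Usum F B + 1.
Proof.
move=> HjF HBj.
have Hp : forall i, move_ball B j i + (i == j) = B i + (i == j.+1).
  move=> i; rewrite /move_ball.
  case: (eqVneq i j) => [->|Hij].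
  - rewrite (ltn_eqF (ltnSn j)) /=; tolia.
  - by case: (eqVneq i j.+1) => _ ; rewrite ?addn0.
have H1 := sum_ind1 (ltnW HjF).
have H2 := sum_ind1 (HjF : j.+1 <= F).
have H3 := sum_indid (ltnW HjF).
have H4 := sum_indid (HjF : j.+1 <= F).
have HS : Ssum F (move_ball B j) + \sum_(i < F.+1) ((i : nat) == j : nat)
        = Ssum F B + \sum_(i < F.+1) ((i : nat) == j.+1 : nat).
  rewrite /Ssum -!big_split /=; apply: eq_bigr => i _; exact: Hp.
have HU : Usum F (move_ball B j) + \sum_(i < F.+1) ((i : nat) == j) * i
        = Usum F B + \sum_(i < F.+1) ((i : nat) == j.+1) * i.
  rewrite /Usum -!big_split /=; apply: eq_bigr => i _.
  by rewrite [_ * i]mulnC [_ * i]mulnC -!mulnDr Hp.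
rewrite H1 H2 in HS; rewrite H3 H4 in HU.
split; tolia.
Qed.

Lemma urn_facts F WX WX' B B' : 0 < F -> urn_step F WX WX' B B' ->
  (WX' != WX + 2 -> B' = B) /\
  (WX' == WX + 2 -> ((forall j, 1 <= j <= F.-1 -> B j = 0) /\ B' = B) \/
     [/\ Ssum F B' = Ssum F B, Usum F B' <= Usum F B + 2 & B' 0 = B 0 - 1]).
Proof.
move=> HF; rewrite /urn_step; case: eqP => [HW|HW] H; last by split.
split => // _; case: H => [H|[j [/andP [Hj1 HjF] HBj ->]]]; first by left.
right.
have HjF' : j < F by rewrite -(prednK HF) ltnS.
have [HS1 HU1] := move_sums HjF' HBj.
have HB10 : move_ball B j 0 = B 0.
  by rewrite /move_ball; case: j Hj1 {HjF HjF' HBj HS1 HU1}.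
case: ifP => H0.
- have [HS2 HU2] := move_sums HF H0.
  split.
  + by rewrite HS2 HS1.
  + by rewrite HU2 HU1 -addnA.
  + by rewrite {1}/move_ball eqxx HB10.
- split => //.
  + by rewrite HU1 leq_add2l.
  + move: H0; rewrite HB10; by case: (B 0).
Qed.

Lemma mid_zero F B : 0 < F -> (forall j, 1 <= j <= F.-1 -> B j = 0) ->
  Ssum F B = B 0 + B F /\ Usum F B = F * B F.
Proof.
case: F => // F _ Hmid.
have Hm : forall i : 'I_F, B (lift ord0 (widen_ord (leqnSn F) i)) = 0.
  move=> i; rewrite /= /bump /= add1n Hmid //= ltnW // ltn_ord.
rewrite /Ssum /Usum; split.
- rewrite big_ord_recl big_ord_recr /= big1 ?add0n ?addn0 // => i _; exact: Hm.
- rewrite big_ord_recl big_ord_recr /= big1 ?mul0n ?add0n ?addn0 // => i _; by rewrite Hm muln0.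
Qed.

Lemma count_sums N F q (X : config N F q) (c : nat -> nat) :
  \sum_(j < F.+1) c j * w X j = \sum_(i < N) c (agree X i).
Proof.
have -> : \sum_(j < F.+1) c j * w X j = \sum_(j < F.+1) \sum_(i < N) ((agree X i == j) * c j).
  apply: eq_bigr => j _; rewrite /w card_sumb big_distrr /=; apply: eq_bigr => i _; by rewrite mulnC.
rewrite exchange_big /=; apply: eq_bigr => i _.
have := sum_eq_ord F.+1 (agree X i) c; rewrite ltnS agreev_le mul1n => <-.
apply: eq_bigr => j _; by rewrite eq_sym.
Qed.

Theorem lemma11 (N F q : nat) (HF : 0 < F) (Hq : 0 < q)
    (X : nat -> config N F q) (B : nat -> nat -> nat) :
  (forall j, j <= F -> B 0 j = w (X 0) j) ->
  forall n : nat,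
    (forall m, m < n ->
       axelrod_step (X m) (X m.+1) /\
       urn_step F (Wtot (X m)) (Wtot (X m.+1)) (B m) (B m.+1)) ->
    B n 0 <= w (X n) 0.
Proof.
move=> H0 n.
suff: (forall m, m < n ->
       axelrod_step (X m) (X m.+1) /\
       urn_step F (Wtot (X m)) (Wtot (X m.+1)) (B m) (B m.+1)) ->
  Ssum F (B n) = N /\ Usum F (B n) <= Wtot (X n) /\ B n 0 <= w (X n) 0.
  by move=> H Hs; case: (H Hs) => _ [].
elim: n => [|n IH] Hs.
- have EB : forall c, \sum_(j < F.+1) c j * B 0 j = \sum_(j < F.+1) c j * w (X 0) j.
    move=> c; apply: eq_bigr => j _; by rewrite H0 // -ltnS ltn_ord.
  split; last split.
  + have E := EB (fun _ => 1); rewrite (count_sums (X 0) (fun _ => 1)) sum_nat_const card_ord muln1 in E.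
    rewrite -E.
    rewrite /Ssum; apply: eq_bigr => j _; by rewrite mul1n.
  + have E := EB id; rewrite (count_sums (X 0) id) in E; by rewrite /Usum E.
  + by rewrite H0.
- have [Hax Hurn] := Hs n (ltnSn n).
  have [HS [HU Hb]] := IH (fun m Hm => Hs m (ltn_trans Hm (ltnSn n))).
  have [HWle Hw0] := step_W Hax.
  have Hbd := step_bound Hax.
  have [Hne Heq] := urn_facts HF Hurn.
  case: (eqVneq (Wtot (X n.+1)) (Wtot (X n) + 2)) => HW.
  + rewrite HW eqxx in Hw0; change (nat_of_bool true) with 1 in Hw0.
    case: (Heq (introT eqP HW)) => [[Hmid ->]|[HS' HU' H0']].
    * have [HSm HUm] := mid_zero HF Hmid.
      have Hlt : B n 0 < w (X n) 0.
        rewrite ltn_neqAle Hb andbT; apply/eqP => E.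
        have HBF : B n F = N - w (X n) 0 by clear -HS HSm E; tolia.
        rewrite HBF in HUm; rewrite -HUm in Hbd; tolia.
      split; [done | split; tolia].
    * rewrite HS' H0'; split; [done | split; tolia].
  + rewrite (Hne HW); rewrite (negbTE HW) addn0 in Hw0.
    split; [done | split; tolia].
Qed.
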